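(* If there exists a non-principal nowhere dense ultrafilter on $\omega$, then there exists a $\sigma$-centered forcing notion $\mathbb{P}$ such that above every element of $\mathbb{P}$ there are two incompatible elements and $\mathbb{P}$ does not add a Cohen real.
   Context: Forcing order convention: $p\leqslant q$ means $q$ is stronger than $p$. $\mathbb{P}$ is $\sigma$-centered if $\mathbb{P}=\bigcup_{n<\omega}A_n$ with each $A_n$ directed (any two elements of $A_n$ have a common upper bound in $A_n$). $\mathbb{P}$ adds a Cohen real if there is a $\mathbb{P}$-name $\underline{r}$ for an element of ${}^\omega 2$ such that for every ground-model open dense $\mathcal{D}\subseteq{}^\omega 2$, $\Vdash_{\mathbb{P}}\underline{r}\in\mathcal{D}^*$, $\mathcal{D}^*$ being the reinterpretation of $\mathcal{D}$ in the extension. A filter $D$ on $\omega$ is nowhere dense if for every $f\colon\omega\to{}^\omega 2$ there is $A\in D$ with $f(A)$ nowhere dense in ${}^\omega 2$. *)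

(* Defs.v *)
From Stdlib Require Import Arith.

(* Cantor space 2^omega = nat -> bool. [agree x y n]: x and y agree below n,
   i.e. y lies in the basic clopen set [x|n]. *)
Definition agree (x y : nat -> bool) (n : nat) : Prop :=
  forall k, k < n -> x k = y k.

Definition nowhere_dense (S : (nat -> bool) -> Prop) : Prop :=
  forall (x : nat -> bool) (n : nat),
    exists (y : nat -> bool) (m : nat),
      n <= m /\ agree x y n /\ (forall z, agree y z m -> ~ S z).

Definition is_open (D : (nat -> bool) -> Prop) : Prop :=
  forall x, D x -> exists n, forall y, agree x y n -> D y.

Definition is_dense (D : (nat -> bool) -> Prop) : Prop :=
  forall (x : nat -> bool) (n : nat), exists y, agree x y n /\ D y.

Definition ultrafilter (U : (nat -> Prop) -> Prop) : Prop :=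
  U (fun _ => True) /\
  ~ U (fun _ => False) /\
  (forall A B : nat -> Prop, U A -> (forall n, A n -> B n) -> U B) /\
  (forall A B : nat -> Prop, U A -> U B -> U (fun n => A n /\ B n)) /\
  (forall A : nat -> Prop, U A \/ U (fun n => ~ A n)).

Definition nonprincipal (U : (nat -> Prop) -> Prop) : Prop :=
  forall m : nat, ~ U (fun n => n = m).

Definition nowhere_dense_filter (U : (nat -> Prop) -> Prop) : Prop :=
  forall f : nat -> (nat -> bool),
    exists A : nat -> Prop, U A /\
      nowhere_dense (fun z => exists n, A n /\ f n = z).

(* Forcing notions: a preorder [le]; [le p q] means q is stronger than p. *)
Definition preorder {P : Type} (le : P -> P -> Prop) : Prop :=
  (forall p, le p p) /\ (forall p q r, le p q -> le q r -> le p r).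

Definition compatible {P : Type} (le : P -> P -> Prop) (p q : P) : Prop :=
  exists r, le p r /\ le q r.

Definition splitting {P : Type} (le : P -> P -> Prop) : Prop :=
  forall p, exists q r, le p q /\ le p r /\ ~ compatible le q r.

Definition sigma_centered {P : Type} (le : P -> P -> Prop) : Prop :=
  exists C : nat -> P -> Prop,
    (forall p, exists n, C n p) /\
    (forall n p q, C n p -> C n q -> exists r, C n r /\ le p r /\ le q r).

(* A P-name for an element of 2^omega, represented by the sets
   [A n i] = {p | p forces r(n) = i}: these are open (closed upward under
   strengthening), [A n true] and [A n false] are disjoint, and their union
   is dense. *)
Definition real_name {P : Type} (le : P -> P -> Prop)
  (A : nat -> bool -> P -> Prop) : Prop :=
  (forall n i p q, A n i p -> le p q -> A n i q) /\
  (forall n p, A n true p -> A n false p -> False) /\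
  (forall n p, exists q, le p q /\ (A n true q \/ A n false q)).

(* p decides an initial segment of the name r which lies in a basic open
   subset of D; "forces r ∈ D*" (for D open) iff such p are dense. *)
Definition forces_in {P : Type} (le : P -> P -> Prop)
  (A : nat -> bool -> P -> Prop) (D : (nat -> bool) -> Prop) : Prop :=
  forall p, exists q, le p q /\
    exists (x : nat -> bool) (m : nat),
      (forall y, agree x y m -> D y) /\ (forall k, k < m -> A k (x k) q).

Definition adds_cohen_real {P : Type} (le : P -> P -> Prop) : Prop :=
  exists A : nat -> bool -> P -> Prop,
    real_name le A /\
    forall D : (nat -> bool) -> Prop, is_open D -> is_dense D -> forces_in le A D.

(* Main.v *)
Require Import Defs.
From Stdlib Require Import Arith List Lia Cantor ClassicalEpsilon Classical.
Import ListNotations.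

Lemma choice_fun {X Y : Type} (R : X -> Y -> Prop) :
  (forall a, exists b, R a b) -> exists f : X -> Y, forall a, R a (f a).
Proof.
  intros H. exists (fun a => proj1_sig (constructive_indefinite_description _ (H a))).
  intro a. exact (proj2_sig (constructive_indefinite_description _ (H a))).
Qed.

Fixpoint enc (l : list nat) : nat :=
  match l with [] => 0 | a :: t => S (Cantor.to_nat (a, enc t)) end.

Lemma enc_lt a t : enc t < enc (a :: t).
Proof. cbn [enc]. pose proof (Cantor.to_nat_non_decreasing a (enc t)). lia. Qed.

Lemma enc_inj : forall l1 l2, enc l1 = enc l2 -> l1 = l2.
Proof.
  induction l1 as [|a t IH]; destruct l2 as [|b u]; cbn [enc]; intros H; try discriminate; auto.
  apply Nat.succ_inj in H. apply (f_equal Cantor.of_nat) in H. rewrite !Cantor.cancel_of_to in H.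
  injection H as -> H. f_equal. auto.
Qed.

Lemma app_same_len {X} (e1 e2 x y : list X) :
  length e1 = length e2 -> e1 ++ x = e2 ++ y -> x = y.
Proof.
  revert e2; induction e1 as [|a e1 IH]; destruct e2 as [|b e2]; simpl; intros Hl H;
    try discriminate; auto. injection H as _ H. injection Hl as Hl. eauto.
Qed.

Lemma app_cons_inv {X} (e1 e2 : list X) a b t :
  e1 ++ a :: t = e2 ++ b :: t -> a = b.
Proof.
  intros H. assert (Hl := f_equal (@length X) H). rewrite !length_app in Hl. simpl in Hl.
  assert (a :: t = b :: t) by (apply (app_same_len e1 e2); [lia|auto]). congruence.
Qed.

Lemma app_cons_neq {X} (e : list X) a t : t <> e ++ a :: t.
Proof. intros H. assert (Hl := f_equal (@length X) H). rewrite length_app in Hl. simpl in Hl. lia. Qed.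

Lemma nwd_sub (S T : (nat->bool)->Prop) :
  nowhere_dense T -> (forall z, S z -> T z) -> nowhere_dense S.
Proof. intros H HS x n. destruct (H x n) as (y & m & H1 & H2 & H3). exists y, m. repeat split; auto. intros z Hz HSz. apply (H3 z Hz). auto. Qed.

Lemma nwd_union S T :
  nowhere_dense S -> nowhere_dense T -> nowhere_dense (fun z => S z \/ T z).
Proof.
  intros HS HT x n. destruct (HS x n) as (y1 & m1 & Hn1 & Ha1 & Hy1).
  destruct (HT y1 m1) as (y2 & m2 & Hn2 & Ha2 & Hy2).
  exists y2, m2. split; [lia|]. split.
  - intros k Hk. rewrite Ha1 by lia. apply Ha2. lia.
  - intros z Hz [H|H].
    + apply (Hy1 z); auto. intros k Hk. rewrite Ha2 by lia. apply Hz. lia.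
    + apply (Hy2 z); auto.
Qed.

Lemma nwd_point c : nowhere_dense (fun z => c = z).
Proof.
  intros x n. exists (fun i => if i <? n then x i else negb (c i)), (S n).
  split; [lia|]. split.
  - intros k Hk. destruct (Nat.ltb_spec k n); [reflexivity|lia].
  - intros z Hz Hc. subst z. specialize (Hz n ltac:(lia)).
    cbv beta in Hz. rewrite Nat.ltb_irrefl in Hz. destruct (c n); simpl in Hz; discriminate.
Qed.

Lemma uf_nonempty U : ultrafilter U -> forall A, U A -> exists a, A a.
Proof.
  intros (H1&H2&H3&H4&H5) A HA. apply NNPP. intro Hn. apply H2.
  apply (H3 A); auto. intros n Hn'. apply Hn. eauto.
Qed.

Record cond (U : (nat -> Prop) -> Prop) := mkc
  { stem : list nat; br : list nat -> nat -> Prop; brU : forall u, U (br u) }.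
Arguments mkc {U}. Arguments stem {U}. Arguments br {U}. Arguments brU {U}.

Inductive Ext (psi : list nat -> nat -> Prop) (s : list nat) : list nat -> Prop :=
| Ext_refl : Ext psi s s
| Ext_step t a : Ext psi s t -> psi t a -> Ext psi s (a :: t).

Definition cle {U} (p q : cond U) : Prop :=
  Ext (br p) (stem p) (stem q) /\ forall u a, br q u a -> br p u a.

Lemma Ext_trans psi s t u : Ext psi s t -> Ext psi t u -> Ext psi s u.
Proof. intros H1 H2. induction H2; auto. constructor; auto. Qed.

Lemma Ext_mono_on (psi psi' : list nat -> nat -> Prop) s t :
  Ext psi s t -> (forall u b, Ext psi s u -> psi u b -> psi' u b) -> Ext psi' s t.
Proof. intros H Hm. induction H; constructor; auto. Qed.

Lemma Ext_mono (psi psi' : list nat -> nat -> Prop) s t :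
  Ext psi s t -> (forall u b, psi u b -> psi' u b) -> Ext psi' s t.
Proof. intros H Hm. apply (Ext_mono_on psi); auto. Qed.

Lemma Ext_app psi s t : Ext psi s t -> exists e, t = e ++ s.
Proof. intros H; induction H. - exists []; auto. - destruct IHExt as [e ->]. exists (a :: e); auto. Qed.

Lemma Ext_enc psi s t : Ext psi s t -> enc s <= enc t.
Proof. intros H; induction H; auto. pose proof (enc_lt a t). lia. Qed.

Lemma Ext_first psi t t' : Ext psi t t' -> t' = t \/ exists a, psi t a /\ Ext psi (a :: t) t'.
Proof.
  intros H; induction H as [|t'' a H IH Hp].
  - left; auto.
  - right. destruct IH as [->|(b & Hb & He)].
    + exists a. split; auto. constructor.
    + exists b. split; auto. constructor; auto.
Qed.

Lemma cle_refl U (p : cond U) : cle p p.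
Proof. split; auto. constructor. Qed.

Lemma cle_trans U (p q r : cond U) : cle p q -> cle q r -> cle p r.
Proof.
  intros [H1 H2] [H3 H4]. split; auto.
  apply (Ext_trans _ _ (stem q)); auto. apply (Ext_mono (br q)); auto.
Qed.
Lemma uf_true U : ultrafilter U -> U (fun _ => True).
Proof. intros H; apply H. Qed.
Lemma uf_false U : ultrafilter U -> ~ U (fun _ => False).
Proof. intros H; apply H. Qed.
Lemma uf_mono U : ultrafilter U -> forall A B : nat -> Prop, U A -> (forall n, A n -> B n) -> U B.
Proof. intros H; apply H. Qed.
Lemma uf_inter U : ultrafilter U -> forall A B : nat -> Prop, U A -> U B -> U (fun n => A n /\ B n).
Proof. intros H; apply H. Qed.
Lemma uf_ult U : ultrafilter U -> forall A : nat -> Prop, U A \/ U (fun n => ~ A n).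
Proof. intros H; apply H. Qed.

Definition cmeet {U} (HU : ultrafilter U) (t : list nat) (p q : cond U) : cond U :=
  mkc t (fun u a => br p u a /\ br q u a) (fun u => uf_inter U HU _ _ (brU p u) (brU q u)).

Definition Forces {U} (A : nat -> bool -> cond U -> Prop) (q : cond U) k i : Prop :=
  forall q', cle q q' -> exists q'', cle q' q'' /\ A k i q''.
Definition Decides {U} (A : nat -> bool -> cond U -> Prop) (t : list nat) k i : Prop :=
  exists q : cond U, stem q = t /\ Forces A q k i.

Lemma Forces_up U (A : nat -> bool -> cond U -> Prop) (q q' : cond U) k i : Forces A q k i -> cle q q' -> Forces A q' k i.
Proof. intros H H1 q'' H2. apply H. eapply cle_trans; eauto. Qed.

Lemma A_forces U (A : nat -> bool -> cond U -> Prop) (HA : real_name cle A) (q : cond U) k i : A k i q -> Forces A q k i.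
Proof. intros H q' Hq. exists q'. split; [apply cle_refl|]. destruct HA as [H1 _]. eauto. Qed.

Lemma Forces_both U (A : nat -> bool -> cond U -> Prop) (HA : real_name cle A) (q : cond U) k :
  Forces A q k true -> Forces A q k false -> False.
Proof.
  intros H1 H2. destruct (H1 q (cle_refl _ _)) as (q1 & Hq1 & Ha1).
  destruct (H2 q1 Hq1) as (q2 & Hq2 & Ha2).
  destruct HA as [Hup [Hdis _]]. apply (Hdis k q2); eauto.
Qed.

Lemma Decides_unique U (HU : ultrafilter U) (A : nat -> bool -> cond U -> Prop) (HA : real_name cle A) t k i1 i2 :
  Decides A t k i1 -> Decides A t k i2 -> i1 = i2.
Proof.
  intros (q1 & Hs1 & H1) (q2 & Hs2 & H2).
  set (w := cmeet HU t q1 q2).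
  assert (c1 : cle q1 w). { split. - simpl. rewrite Hs1. constructor. - simpl. tauto. }
  assert (c2 : cle q2 w). { split. - simpl. rewrite Hs2. constructor. - simpl. tauto. }
  pose proof (Forces_up _ _ _ _ _ _ H1 c1) as F1.
  pose proof (Forces_up _ _ _ _ _ _ H2 c2) as F2.
  destruct i1, i2; auto; exfalso; eapply Forces_both; eauto.
Qed.

Definition Ranked {U} (A : nat -> bool -> cond U -> Prop) k (t : list nat) : Prop :=
  forall R : list nat -> Prop,
    (forall t, (exists i, Decides A t k i) -> R t) ->
    (forall t, U (fun a => R (a :: t)) -> R t) -> R t.

Lemma Ranked_step U (HU : ultrafilter U) (A : nat -> bool -> cond U -> Prop) k t :
  U (fun a => Ranked A k (a :: t)) -> Ranked A k t.
Proof.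
  intros H R H0 H1. apply H1. apply (uf_mono U HU _ _ H). intros a Ha. apply Ha; auto.
Qed.

Lemma all_ranked U (HU : ultrafilter U) (A : nat -> bool -> cond U -> Prop) (HA : real_name cle A) k t : Ranked A k t.
Proof.
  apply NNPP. intros Hn.
  set (psi := fun u a => ~ Ranked A k u -> ~ Ranked A k (a :: u)).
  assert (HpsiU : forall u, U (psi u)).
  { intros u. destruct (classic (Ranked A k u)) as [Hr|Hr].
    - apply (uf_mono U HU _ _ (uf_true U HU)). intros a _ Hc. contradiction.
    - destruct (uf_ult U HU (fun a => Ranked A k (a :: u))) as [H|H].
      + exfalso. apply Hr. apply Ranked_step; auto.
      + apply (uf_mono U HU _ _ H). intros a Ha _. exact Ha. }
  set (q := mkc t psi HpsiU).
  destruct HA as [Hup [Hdis Hden]].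
  destruct (Hden k q) as (q' & [Hext _] & Hq').
  assert (Hnr : forall u, Ext psi t u -> ~ Ranked A k u).
  { intros u Hu. induction Hu; auto. }
  apply (Hnr (stem q') Hext).
  intros R H0 H1. apply H0.
  destruct Hq' as [Hq'|Hq']; [exists true|exists false]; exists q'; split; auto;
    apply A_forces; auto; split; auto.
Qed.

Lemma combine U (HU : ultrafilter U) (A : nat -> bool -> cond U -> Prop) (HA : real_name cle A) k t i :
  U (fun a => Decides A (a :: t) k i) -> Decides A t k i.
Proof.
  intros HH. set (H := fun a => Decides A (a :: t) k i) in *.
  set (p0 := mkc (U:=U) [] (fun _ _ => True) (fun _ => uf_true U HU)).
  assert (HQ : forall a, exists q : cond U, H a -> stem q = a :: t /\ Forces A q k i).
  { intros a. destruct (classic (H a)) as [Ha|Ha].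
    - destruct Ha as (q & Hq1 & Hq2). exists q. auto.
    - exists p0. intros; contradiction. }
  destruct (choice_fun _ HQ) as [Q HQs].
  set (psi := fun u b => (u = t -> H b) /\ (forall a e, H a -> u = e ++ a :: t -> br (Q a) u b)).
  assert (HpsiU : forall u, U (psi u)).
  { intros u. destruct (classic (u = t)) as [->|Hne].
    - apply (uf_mono U HU _ _ HH). intros b Hb. split; auto.
      intros a e _ He. exfalso. apply (app_cons_neq e a t He).
    - destruct (classic (exists a e, H a /\ u = e ++ a :: t)) as [(a0 & e0 & Ha0 & He0)|Hno].
      + apply (uf_mono U HU _ _ (brU (Q a0) u)). intros b Hb. split; [intros; contradiction|].
        intros a e Ha He. rewrite He0 in He. pose proof (app_cons_inv _ _ _ _ _ He) as ->. auto.
      + apply (uf_mono U HU _ _ (uf_true U HU)). intros b _. split; [intros; contradiction|].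
        intros a e Ha He. exfalso. apply Hno. eauto. }
  exists (mkc t psi HpsiU). split; [reflexivity|].
  intros q' [Hext Hsub]. simpl in Hext, Hsub.
  destruct (Ext_first _ _ _ Hext) as [Heq|(a & Ha & He)].
  - destruct (uf_nonempty U HU _ (brU q' t)) as [a Ha].
    assert (HHa : H a) by (apply (Hsub t a Ha); auto).
    destruct (HQs a HHa) as [Hs Hf].
    set (q1 := cmeet HU (a :: t) q' (Q a)).
    assert (c1 : cle q' q1). { split. - simpl. rewrite Heq. constructor; [constructor|auto]. - simpl. tauto. }
    assert (c2 : cle (Q a) q1). { split. - simpl. rewrite Hs. constructor. - simpl. tauto. }
    destruct (Hf q1 c2) as (q'' & Hq'' & HA'').
    exists q''. split; auto. eapply cle_trans; eauto.
  - assert (HHa : H a) by (apply (proj1 Ha); auto).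
    destruct (HQs a HHa) as [Hs Hf].
    set (q1 := cmeet HU (stem q') q' (Q a)).
    assert (c1 : cle q' q1). { split. - simpl. constructor. - simpl. tauto. }
    assert (c2 : cle (Q a) q1).
    { split.
      - simpl. rewrite Hs. apply (Ext_mono_on psi); auto.
        intros u b Hu Hb. destruct (Ext_app _ _ _ Hu) as [e He2].
        apply (proj2 Hb a e HHa He2).
      - simpl. tauto. }
    destruct (Hf q1 c2) as (q'' & Hq'' & HA'').
    exists q''. split; auto. eapply cle_trans; eauto.
Qed.

Lemma decides_exists U (HU : ultrafilter U) (A : nat -> bool -> cond U -> Prop) (HA : real_name cle A) k t :
  exists i, Decides A t k i.
Proof.
  apply (all_ranked U HU A HA k t); auto.
  intros t0 Ht0.
  destruct (uf_ult U HU (fun a => Decides A (a :: t0) k true)) as [H|H].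
  - exists true. apply combine; auto.
  - exists false. apply combine; auto.
    apply (uf_mono U HU _ _ (uf_inter U HU _ _ Ht0 H)).
    intros a [[i Hi] Hn]. destruct i; [contradiction|exact Hi].
Qed.
Definition yv {U} (A : nat -> bool -> cond U -> Prop) t k : bool :=
  if excluded_middle_informative (Decides A t k true) then true else false.

Lemma y_dec U (HU : ultrafilter U) (A : nat -> bool -> cond U -> Prop) (HA : real_name cle A) t k :
  Decides A t k (yv A t k).
Proof.
  unfold yv. destruct (excluded_middle_informative _) as [H|H]; auto.
  destruct (decides_exists U HU A HA k t) as [[|] Hi]; auto. contradiction.
Qed.

Lemma F1 U (HU : ultrafilter U) (A : nat -> bool -> cond U -> Prop) (HA : real_name cle A)
  (q : cond U) k i : A k i q -> yv A (stem q) k = i.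
Proof.
  intros H. apply (Decides_unique U HU A HA (stem q) k).
  - apply y_dec; auto.
  - exists q. split; auto. apply A_forces; auto.
Qed.

Lemma F2 U (HU : ultrafilter U) (A : nat -> bool -> cond U -> Prop) (HA : real_name cle A) t k :
  U (fun a => forall k', k' < k -> yv A (a :: t) k' = yv A t k').
Proof.
  induction k as [|k IH].
  - apply (uf_mono U HU _ _ (uf_true U HU)). intros; lia.
  - assert (H1 : U (fun a => yv A (a :: t) k = yv A t k)).
    { destruct (y_dec U HU A HA t k) as (q & Hs & Hf).
      apply (uf_mono U HU _ _ (brU q t)). intros a Ha.
      apply (Decides_unique U HU A HA (a :: t) k); [apply y_dec; auto|].
      exists (mkc (a :: t) (br q) (brU q)). split; auto.
      apply (Forces_up _ _ q); auto. split.
      - simpl. rewrite Hs. constructor; [constructor|auto].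
      - simpl. auto. }
    apply (uf_mono U HU _ _ (uf_inter U HU _ _ IH H1)).
    intros a [Ha Hb] k' Hk'. destruct (Nat.eq_dec k' k) as [->|Hne]; auto. apply Ha. lia.
Qed.

Lemma bound_fun (f : list bool -> nat) m : exists B, forall l, length l <= m -> f l <= B.
Proof.
  revert f. induction m as [|m IH]; intros f.
  - exists (f []). intros [|b l] H; simpl in H; [lia|lia].
  - destruct (IH (fun l => f (true :: l))) as [B1 H1].
    destruct (IH (fun l => f (false :: l))) as [B2 H2].
    exists (f [] + B1 + B2). intros [|[|] l] H; simpl in H.
    + lia.
    + specialize (H1 l ltac:(lia)). simpl in H1. lia.
    + specialize (H2 l ltac:(lia)). simpl in H2. lia.
Qed.

Fixpoint kb (B : nat -> nat) (m : nat) : nat :=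
  match m with 0 => 0 | S m => kb B m + B m end.

Lemma kb_mono B m m' : m <= m' -> kb B m <= kb B m'.
Proof. induction 1; simpl; lia. Qed.

Lemma kb_ge B m : B m <= kb B (S m).
Proof. simpl. lia. Qed.

Lemma nth_map_seq (x : nat -> bool) n k : k < n -> nth k (map x (seq 0 n)) false = x k.
Proof.
  intros Hk. rewrite nth_indep with (d' := x 0) by (rewrite length_map, length_seq; lia).
  rewrite map_nth, seq_nth by lia. reflexivity.
Qed.

Lemma tree_nwd U (HU : ultrafilter U) (Hnd : nowhere_dense_filter U)
  (y : list nat -> nat -> bool)
  (HG : forall t k, U (fun a => forall k', k' < k -> y (a :: t) k' = y t k')) :
  exists psi : list nat -> nat -> Prop, (forall u, U (psi u)) /\
    nowhere_dense (fun z => exists t, Ext psi [] t /\ y t = z).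
Proof.
  destruct (choice_fun (fun t A0 => U A0 /\ nowhere_dense (fun z => exists n, A0 n /\ y (n :: t) = z))
              (fun t => Hnd (fun n => y (n :: t)))) as [A0 HA0].
  set (W := fun n z => y [] = z \/ exists u a, enc u <= n /\ A0 u a /\ y (a :: u) = z).
  set (V := fun i z => exists u a, enc u = i /\ A0 u a /\ y (a :: u) = z).
  assert (HV : forall i, nowhere_dense (V i)).
  { intros i. destruct (classic (exists u0, enc u0 = i)) as [[u0 Hu0]|Hno].
    - apply (nwd_sub _ _ (proj2 (HA0 u0))). intros z (u & a & Hu & Ha & Hz).
      rewrite <- Hu0 in Hu. apply enc_inj in Hu. subst u. eauto.
    - apply (nwd_sub _ _ (nwd_point (fun _ => true))). intros z (u & a & Hu & _).
      exfalso; eauto. }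
  assert (HW : forall n, nowhere_dense (W n)).
  { induction n as [|n IH].
    - apply (nwd_sub _ _ (nwd_union _ _ (nwd_point (y [])) (HV 0))).
      intros z [H|(u & a & Hu & Ha & Hz)]; [left; auto|right]. exists u, a. repeat split; auto. lia.
    - apply (nwd_sub _ _ (nwd_union _ _ IH (HV (S n)))).
      intros z [H|(u & a & Hu & Ha & Hz)]; [left; left; auto|].
      destruct (Nat.eq_dec (enc u) (S n)) as [He|He].
      + right. exists u, a. auto.
      + left. right. exists u, a. repeat split; auto. lia. }
  destruct (choice_fun (fun (l : list bool) (r : (nat -> bool) * nat) =>
      length l <= snd r /\ agree (fun i => nth i l false) (fst r) (length l) /\
      (forall w, agree (fst r) w (snd r) -> ~ W (length l) w))
     (fun l => match HW (length l) (fun i => nth i l false) (length l) with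
               | ex_intro _ z (ex_intro _ m H) => ex_intro _ (z, m) H end)) as [tau Htau].
  destruct (choice_fun (fun m B => forall l, length l <= m -> snd (tau l) <= B)
              (fun m => bound_fun (fun l => snd (tau l)) m)) as [Bnd HBnd].
  set (kk := fun t => kb Bnd (enc t)).
  set (psi := fun t a => A0 t a /\ forall k', k' < kk t -> y (a :: t) k' = y t k').
  exists psi. split.
  { intros u. apply (uf_inter U HU); [apply HA0|apply HG]. }
  assert (Hball : forall v t, Ext psi v t -> agree (y v) (y t) (kk v)).
  { intros v t H. induction H as [|t a H IH Hp]; [intros k _; auto|].
    intros k Hk. rewrite IH by auto. symmetry. apply (proj2 Hp).
    pose proof (Ext_enc _ _ _ H). unfold kk in *.
    pose proof (kb_mono Bnd _ _ H0). lia. }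
  intros x n.
  set (l := map x (seq 0 n)).
  assert (Hl : length l = n) by (unfold l; rewrite length_map, length_seq; auto).
  destruct (Htau l) as (H1 & H2 & H3). rewrite Hl in H1, H2, H3.
  exists (fst (tau l)), (snd (tau l)). split; [auto|]. split.
  { intros k Hk. rewrite <- (H2 k Hk). unfold l. rewrite nth_map_seq; auto. }
  intros w Hw (t & Ht & Hyt). subst w.
  assert (R : forall t1, Ext psi [] t1 -> exists v, Ext psi v t1 /\ W n (y v) /\ (v = t1 \/ n < enc v)).
  { clear Hw Ht. intros t1 Ht1. induction Ht1 as [|t2 a Ht2 IH Hp].
    - exists []. split; [constructor|]. split; [left; auto|left; auto].
    - destruct (le_lt_dec (enc t2) n) as [Hle|Hlt].
      + exists (a :: t2). split; [constructor|]. split; [|left; auto].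
        right. exists t2, a. split; auto. split; auto. apply Hp.
      + destruct IH as (v & Hv1 & Hv2 & Hv3).
        exists v. split; [constructor; auto|]. split; auto. right.
        destruct Hv3 as [->|]; auto. }
  destruct (R t Ht) as (v & Hv1 & Hv2 & [->|Hlt]).
  - apply (H3 (y t)); auto.
  - apply (H3 (y v)); auto.
    intros k Hk. rewrite (Hw k Hk). symmetry. apply (Hball v t Hv1).
    unfold kk. pose proof (HBnd n l ltac:(lia)).
    pose proof (kb_ge Bnd n). pose proof (kb_mono Bnd (S n) (enc v) ltac:(lia)). lia.
Qed.
Theorem theorem3 :
  (exists U : (nat -> Prop) -> Prop,
      ultrafilter U /\ nonprincipal U /\ nowhere_dense_filter U) ->
  exists (P : Type) (le : P -> P -> Prop),
    inhabited P /\ preorder le /\ sigma_centered le /\ splitting le /\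
    ~ adds_cohen_real le.
Proof.
  intros (U & HU & Hnp & Hnd).
  exists (cond U), cle.
  split; [exact (inhabits (mkc [] (fun _ _ => True) (fun _ => uf_true U HU)))|].
  split; [split; [apply cle_refl|intros p q r; apply cle_trans]|].
  split.
  { exists (fun n (p : cond U) => enc (stem p) = n). split.
    - intros p. eauto.
    - intros n p q Hp Hq. rewrite <- Hq in Hp. apply enc_inj in Hp.
      exists (cmeet HU (stem p) p q). split; [simpl; rewrite Hp; auto|]. split.
      + split; [constructor|simpl; tauto].
      + split; [simpl; rewrite Hp; constructor|simpl; tauto]. }
  split.
  { intros p. destruct (uf_nonempty U HU _ (brU p (stem p))) as [a Ha].
    assert (Hb : U (fun b => br p (stem p) b /\ ~ b = a)).
    { apply (uf_inter U HU); [apply brU|].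
      destruct (uf_ult U HU (fun n => n = a)) as [H|H]; auto. exfalso. apply (Hnp a H). }
    destruct (uf_nonempty U HU _ Hb) as [b [Hb1 Hb2]].
    exists (mkc (a :: stem p) (br p) (brU p)), (mkc (b :: stem p) (br p) (brU p)).
    split; [split; [simpl; constructor; [constructor|auto]|simpl; auto]|].
    split; [split; [simpl; constructor; [constructor|auto]|simpl; auto]|].
    intros (w & [Hw1 _] & [Hw2 _]). simpl in Hw1, Hw2.
    destruct (Ext_app _ _ _ Hw1) as [e1 He1]. destruct (Ext_app _ _ _ Hw2) as [e2 He2].
    rewrite He1 in He2. apply app_cons_inv in He2. auto. }
  intros (A & HA & HD).
  destruct (tree_nwd U HU Hnd (yv A) (F2 U HU A HA)) as (psi & HpsiU & Hnwd).
  set (S := fun z => exists t, Ext psi [] t /\ yv A t = z) in *.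
  set (D := fun z => exists n, forall w, agree z w n -> ~ S w).
  assert (HDo : is_open D).
  { intros z [n Hn]. exists n. intros w Hw. exists n. intros w' Hw'. apply Hn.
    intros k Hk. rewrite Hw by auto. apply Hw'; auto. }
  assert (HDd : is_dense D).
  { intros x n. destruct (Hnwd x n) as (y' & m & _ & Ha & Hy). exists y'. split; auto.
    exists m. auto. }
  destruct (HD D HDo HDd (mkc [] psi HpsiU)) as (q & [Hq _] & x & m & Hsub & HAq).
  simpl in Hq.
  assert (Hag : agree x (yv A (stem q)) m).
  { intros k Hk. symmetry. apply (F1 U HU A HA q k (x k)). auto. }
  destruct (Hsub _ Hag) as [n Hn]. apply (Hn (yv A (stem q))).
  - intros k _. reflexivity.
  - exists (stem q). auto.
Qed.
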